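(* Let $p\in(0,1)$, $\gamma>0$, $B>0$, $w\in\mathbb{N}$, and for each $N\in\mathbb{N}$ let $(\xi_j^{(N)*})_{j=1}^N$ be the unique maximizer of $\mathcal{T}_N$. Let $(\xi_j^* )_{j\ge1}$ be the unique maximizer of $\mathcal{T}_\infty$ over admissible sequences. Then for every fixed $j\in\mathbb{N}$, the limit $\lim_{N\to\infty}\xi_j^{(N)*}$ exists and equals $\xi_j^*$.
   Context: Logarithms are base 2. A nonnegative sequence $(x_j)_{j\ge1}$ is admissible if $\sum_j x_j\le B$. For an admissible sequence, $$\mathcal{T}_\infty(x_1,x_2,\dots)=\sum_{k=1}^{w}p^2(1-p)^{k-1}\frac{k}{2}\log_2\!\Big(1+\gamma\frac{B}{k}\Big)+\sum_{j=1}^{\infty}p(1-p)^{j+w-1}\frac12\log_2(1+\gamma x_j)+\sum_{k=1}^{\infty}p^2(1-p)^{k+w-1}\frac{w}{2}\log_2\!\Big(1+\gamma\frac{B-\sum_{j=1}^{k}x_j}{w}\Big).$$ The paper takes as given that $\mathcal{T}_\infty$ has a unique maximizer over admissible sequences. For $N\in\mathbb{N}$ and $\xi_1,\dots,\xi_N\ge0$ with $\sum_{j=1}^N\xi_j\le B$, define $\mathcal{T}_N(\xi_1,\dots,\xi_N)=\mathcal{T}_\infty(\xi_1,\dots,\xi_N,0,0,\dots)$. $\mathcal{T}_N$ has a unique maximizer over this compact set, denoted $(\xi_j^{(N)*})_{j=1}^N$. *)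

(* Defs.v *)
From Stdlib Require Import Reals Lra.
From Coquelicot Require Import Coquelicot.
Open Scope R_scope.

Definition log2 (x : R) : R := ln x / ln 2.

(* Sequences are 0-indexed: x i stands for the paper's x_{i+1}. *)

(* Admissible: nonnegative and sum_j x_j <= B (all partial sums <= B). *)
Definition admissible (B : R) (x : nat -> R) : Prop :=
  (forall i, 0 <= x i) /\ (forall n, sum_f_R0 x n <= B).

(* Requires w >= 1.
   First sum: k = i+1 for i = 0..w-1.
   Second sum: j = i+1, weight p(1-p)^{j+w-1} = p(1-p)^{i+w}.
   Third sum: k = i+1, weight p^2(1-p)^{k+w-1} = p^2(1-p)^{i+w},
   and sum_{j=1}^{k} x_j = sum_f_R0 x i. *)
Definition T_inf (p gamma B : R) (w : nat) (x : nat -> R) : R :=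
  sum_f_R0 (fun i => p ^ 2 * (1 - p) ^ i * (INR (S i) / 2)
                      * log2 (1 + gamma * (B / INR (S i)))) (w - 1)
  + Series (fun i => p * (1 - p) ^ (i + w) * (1 / 2) * log2 (1 + gamma * x i))
  + Series (fun i => p ^ 2 * (1 - p) ^ (i + w) * (INR w / 2)
                      * log2 (1 + gamma * ((B - sum_f_R0 x i) / INR w))).

(* Zero-extension of a finite vector (xi_1, ..., xi_N), given as the first N
   values of a function nat -> R. *)
Definition ext0 (N : nat) (xi : nat -> R) : nat -> R :=
  fun i => if Nat.ltb i N then xi i else 0.

Definition T_N (p gamma B : R) (w N : nat) (xi : nat -> R) : R :=
  T_inf p gamma B w (ext0 N xi).

Definition feasibleN (B : R) (N : nat) (xi : nat -> R) : Prop :=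
  (forall i, (i < N)%nat -> 0 <= xi i) /\ sum_n xi (N - 1) <= B.

(* Main.v *)
Require Import Defs.
From Stdlib Require Import Reals.
From Coquelicot Require Import Coquelicot.
From Stdlib Require Import Lra Lia.
Open Scope R_scope.

Lemma ex_geom_bound (a : nat -> R) (q C : R) :
  0 <= q < 1 -> (forall i, 0 <= a i <= C * q ^ i) -> ex_series a.
Proof.
  intros Hq Ha.
  apply (ex_series_le a (fun i => C * q ^ i)).
  - intros n. change (norm (a n)) with (Rabs (a n)).
    rewrite Rabs_pos_eq; [apply Ha | apply Ha].
  - apply (ex_series_ext (fun n => scal C (q ^ n))).
    + intros n; reflexivity.
    + apply (@ex_series_scal_l R_AbsRing R_NormedModule). apply ex_series_geom. rewrite Rabs_pos_eq; lra.
Qed.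

Lemma Series_zero : Series (fun _ => 0) = 0.
Proof.
  rewrite <- (Series_ext (fun n => 0 * 0)) by (intros; ring).
  rewrite Series_scal_l. ring.
Qed.

Lemma Series_ge0 (a : nat -> R) :
  ex_series a -> (forall i, 0 <= a i) -> 0 <= Series a.
Proof.
  intros He Ha. rewrite <- Series_zero. apply Series_le; auto.
  intros n; split; [lra| apply Ha].
Qed.

Lemma term_le_Series (a : nat -> R) (j : nat) :
  ex_series a -> (forall i, 0 <= a i) -> a j <= Series a.
Proof.
  intros He Ha.
  rewrite (Series_incr_n a (S j) (Nat.lt_0_succ j) He).
  simpl Init.Nat.pred.
  assert (0 <= Series (fun k => a (S j + k)%nat)).
  { apply Series_ge0; [ apply (ex_series_incr_n a (S j)); exact He | intros; apply Ha]. }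
  assert (a j <= sum_f_R0 a j).
  { destruct j as [|j]; simpl; [lra|]. pose proof (cond_pos_sum a j Ha). lra. }
  lra.
Qed.

Lemma sum_zero_prefix (a : nat -> R) (N : nat) :
  (forall i, (i < N)%nat -> a i = 0) -> (0 < N)%nat -> sum_f_R0 a (pred N) = 0.
Proof.
  intros H HN. destruct N as [|N]; [lia|]. simpl.
  induction N as [|N IH].
  - simpl. apply H. lia.
  - simpl. rewrite IH; [| intros; apply H; lia | lia]. rewrite (H (S N)) by lia. ring.
Qed.

Lemma tail_bound (a : nat -> R) (q C : R) (N : nat) :
  0 <= q < 1 -> 0 <= C -> (0 < N)%nat ->
  (forall i, (i < N)%nat -> a i = 0) -> (forall i, 0 <= a i <= C * q ^ i) ->
  Series a <= C * q ^ N / (1 - q).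
Proof.
  intros Hq HC HN Hz Ha.
  assert (He : ex_series a) by (eapply ex_geom_bound; eauto).
  rewrite (Series_incr_n a N HN He). rewrite sum_zero_prefix by auto.
  assert (Series (fun k => a (N + k)%nat) <= Series (fun k => (C * q ^ N) * q ^ k)).
  { apply Series_le.
    - intros k. rewrite Rmult_assoc, <- pow_add. apply Ha.
    - apply (ex_series_ext (fun n => scal (C * q ^ N) (q ^ n))); [intros; reflexivity|].
      apply (@ex_series_scal_l R_AbsRing R_NormedModule). apply ex_series_geom. rewrite Rabs_pos_eq; lra. }
  rewrite Series_scal_l, Series_geom in H by (rewrite Rabs_pos_eq; lra).
  unfold Rdiv. lra.
Qed.

Definition a2 (p gamma : R) (w : nat) (x : nat -> R) (i : nat) : R :=
  p * (1 - p) ^ (i + w) * (1 / 2) * log2 (1 + gamma * x i).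
Definition a3 (p gamma B : R) (w : nat) (x : nat -> R) (i : nat) : R :=
  p ^ 2 * (1 - p) ^ (i + w) * (INR w / 2)
  * log2 (1 + gamma * ((B - sum_f_R0 x i) / INR w)).
Definition S1 (p gamma B : R) (w : nat) : R :=
  sum_f_R0 (fun i => p ^ 2 * (1 - p) ^ i * (INR (S i) / 2)
                      * log2 (1 + gamma * (B / INR (S i)))) (w - 1).

Lemma T_inf_eq p gamma B w x :
  T_inf p gamma B w x = S1 p gamma B w + Series (a2 p gamma w x) + Series (a3 p gamma B w x).
Proof. reflexivity. Qed.

Lemma ln2_pos : 0 < ln 2.
Proof. rewrite <- ln_1. apply ln_increasing; lra. Qed.

Lemma log2_le a b : 0 < a -> a <= b -> log2 a <= log2 b.
Proof.
  intros. unfold log2, Rdiv. apply Rmult_le_compat_r.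
  - left; apply Rinv_0_lt_compat, ln2_pos.
  - apply ln_le; auto.
Qed.

Lemma log2_nonneg a : 1 <= a -> 0 <= log2 a.
Proof.
  intros. replace 0 with (log2 1). apply log2_le; lra.
  unfold log2. rewrite ln_1. unfold Rdiv. ring.
Qed.

Lemma log2_1 : log2 1 = 0.
Proof. unfold log2. rewrite ln_1. unfold Rdiv. ring. Qed.

Lemma log_mid a b M d :
  0 < a -> 0 < b -> a <= M -> b <= M -> 0 <= d -> d ^ 2 <= (a - b) ^ 2 ->
  ln a + ln b + ln (1 + d ^ 2 / (4 * M ^ 2)) <= 2 * ln ((a + b) / 2).
Proof.
  intros Ha Hb HaM HbM Hd Hdd.
  assert (HM : 0 < M) by lra.
  assert (0 <= d ^ 2 / (4 * M ^ 2)).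
  { apply Rle_mult_inv_pos. nra. nra. }
  rewrite <- !ln_mult by (try nra).
  replace (2 * ln ((a + b) / 2)) with (ln ((a + b) / 2 * ((a + b) / 2))).
  2:{ rewrite ln_mult by lra. ring. }
  apply ln_le. apply Rmult_lt_0_compat; nra.
  assert (a * b * (d ^ 2 / (4 * M ^ 2)) <= (a - b) ^ 2 / 4).
  { assert (a * b <= M ^ 2) by nra.
    apply Rle_trans with (M ^ 2 * (d ^ 2 / (4 * M ^ 2))).
    apply Rmult_le_compat_r; auto.
    replace (M ^ 2 * (d ^ 2 / (4 * M ^ 2))) with (d ^ 2 / 4) by (field; lra).
    lra. }
  nra.
Qed.

Lemma sum_nonneg (x : nat -> R) n : (forall i, 0 <= x i) -> 0 <= sum_f_R0 x n.
Proof. apply cond_pos_sum. Qed.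

Lemma term_le_sum (x : nat -> R) n : (forall i, 0 <= x i) -> x n <= sum_f_R0 x n.
Proof.
  intros H. destruct n; simpl; [lra|]. pose proof (cond_pos_sum x n H). lra.
Qed.

Lemma adm_x B x i : admissible B x -> 0 <= x i <= B.
Proof.
  intros [H1 H2]. split; auto. eapply Rle_trans; [apply term_le_sum; auto| apply H2].
Qed.

Lemma adm_s B x i : admissible B x -> 0 <= sum_f_R0 x i <= B.
Proof. intros [H1 H2]. split; auto. apply cond_pos_sum; auto. Qed.

Lemma qpow_bound p i w : 0 < p < 1 -> 0 <= (1 - p) ^ (i + w) <= (1 - p) ^ i.
Proof.
  intros Hp. split. apply pow_le; lra.
  rewrite pow_add. rewrite <- (Rmult_1_r ((1 - p) ^ i)) at 2.
  apply Rmult_le_compat_l. apply pow_le; lra.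
  destruct w as [|w]. simpl; lra.
  pose proof (pow_lt_1_compat (1 - p) (S w)). assert (0 <= 1 - p < 1) by lra.
  assert (0 < S w)%nat by lia. pose proof (H H0 H1). lra.
Qed.

Lemma a2_bound p gamma B w x i : 0 < p < 1 -> 0 < gamma -> admissible B x ->
  0 <= a2 p gamma w x i <= (p / 2 * log2 (1 + gamma * B)) * (1 - p) ^ i.
Proof.
  intros Hp Hg Ha. pose proof (adm_x B x i Ha). pose proof (qpow_bound p i w Hp).
  unfold a2.
  assert (0 <= log2 (1 + gamma * x i)) by (apply log2_nonneg; nra).
  assert (log2 (1 + gamma * x i) <= log2 (1 + gamma * B)) by (apply log2_le; nra).
  split.
  - apply Rmult_le_pos; [|auto]. apply Rmult_le_pos; [|lra]. apply Rmult_le_pos; lra.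
  - replace (p / 2 * log2 (1 + gamma * B) * (1 - p) ^ i)
      with (p * (1 - p) ^ i * (1/2) * log2 (1 + gamma * B)) by (unfold Rdiv; ring).
    apply Rmult_le_compat; try lra.
    + apply Rmult_le_pos; [|lra]. apply Rmult_le_pos; lra.
    + apply Rmult_le_compat_r; [lra|]. apply Rmult_le_compat_l; lra.
Qed.

Lemma a3_bound p gamma B w x i : 0 < p < 1 -> 0 < gamma -> (1 <= w)%nat -> admissible B x ->
  0 <= a3 p gamma B w x i <= (p ^ 2 * (INR w / 2) * log2 (1 + gamma * (B / INR w))) * (1 - p) ^ i.
Proof.
  intros Hp Hg Hw Ha. pose proof (adm_s B x i Ha). pose proof (qpow_bound p i w Hp).
  assert (HW : 1 <= INR w) by (apply (le_INR 1); lia).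
  unfold a3.
  assert (0 <= (B - sum_f_R0 x i) / INR w) by (apply Rle_mult_inv_pos; lra).
  assert ((B - sum_f_R0 x i) / INR w <= B / INR w).
  { unfold Rdiv. apply Rmult_le_compat_r. left; apply Rinv_0_lt_compat; lra. lra. }
  assert (0 <= log2 (1 + gamma * ((B - sum_f_R0 x i) / INR w))) by (apply log2_nonneg; nra).
  assert (log2 (1 + gamma * ((B - sum_f_R0 x i) / INR w)) <= log2 (1 + gamma * (B / INR w)))
    by (apply log2_le; nra).
  assert (0 <= p ^ 2) by nra.
  split.
  - apply Rmult_le_pos; [|auto]. apply Rmult_le_pos; [|lra]. apply Rmult_le_pos; lra.
  - replace (p ^ 2 * (INR w / 2) * log2 (1 + gamma * (B / INR w)) * (1 - p) ^ i)
      with (p ^ 2 * (1 - p) ^ i * (INR w / 2) * log2 (1 + gamma * (B / INR w))) by ring.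
    apply Rmult_le_compat; try lra.
    + apply Rmult_le_pos; [|lra]. apply Rmult_le_pos; lra.
    + apply Rmult_le_compat_r; [lra|]. apply Rmult_le_compat_l; lra.
Qed.

Lemma a2_ex p gamma B w x : 0 < p < 1 -> 0 < gamma -> admissible B x -> ex_series (a2 p gamma w x).
Proof.
  intros. apply (ex_geom_bound _ (1 - p) (p / 2 * log2 (1 + gamma * B))). lra.
  intros; apply a2_bound; auto.
Qed.

Lemma a3_ex p gamma B w x : 0 < p < 1 -> 0 < gamma -> (1 <= w)%nat -> admissible B x ->
  ex_series (a3 p gamma B w x).
Proof.
  intros. apply (ex_geom_bound _ (1 - p) (p ^ 2 * (INR w / 2) * log2 (1 + gamma * (B / INR w)))). lra.
  intros; apply a3_bound; auto.
Qed.


Lemma gen_mid K a b M d : 0 <= K -> 0 < a -> 0 < b -> a <= M -> b <= M -> 0 <= d ->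
  d ^ 2 <= (a - b) ^ 2 ->
  (K * log2 a + K * log2 b) / 2 + K / (2 * ln 2) * ln (1 + d ^ 2 / (4 * M ^ 2))
  <= K * log2 ((a + b) / 2).
Proof.
  intros HK Ha Hb HaM HbM Hd Hdd.
  pose proof (log_mid a b M d Ha Hb HaM HbM Hd Hdd).
  pose proof ln2_pos.
  unfold log2.
  replace ((K * (ln a / ln 2) + K * (ln b / ln 2)) / 2 + K / (2 * ln 2) * ln (1 + d ^ 2 / (4 * M ^ 2)))
    with (K / (2 * ln 2) * (ln a + ln b + ln (1 + d ^ 2 / (4 * M ^ 2)))) by (field; lra).
  replace (K * (ln ((a + b) / 2) / ln 2)) with (K / (2 * ln 2) * (2 * ln ((a + b) / 2)))
    by (field; lra).
  apply Rmult_le_compat_l; auto.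
  apply Rle_mult_inv_pos; lra.
Qed.

Definition mid (x y : nat -> R) (i : nat) : R := (x i + y i) / 2.

Lemma sum_mid x y n : sum_f_R0 (mid x y) n = (sum_f_R0 x n + sum_f_R0 y n) / 2.
Proof. induction n; simpl; [unfold mid; lra| rewrite IHn; unfold mid; lra]. Qed.

Lemma mid_adm B x y : admissible B x -> admissible B y -> admissible B (mid x y).
Proof.
  intros Hx Hy. split.
  - intros i. pose proof (adm_x B x i Hx). pose proof (adm_x B y i Hy). unfold mid. lra.
  - intros n. rewrite sum_mid. pose proof (adm_s B x n Hx). pose proof (adm_s B y n Hy). lra.
Qed.

Definition delta (p gamma B eps : R) (w : nat) (i : nat) : R :=
  p * (1 - p) ^ (i + w) * (1 / 2) / (2 * ln 2)
  * ln (1 + (gamma * eps) ^ 2 / (4 * (1 + gamma * B) ^ 2)).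

Lemma a2_mid p gamma B w x y i eps : 0 < p < 1 -> 0 < gamma -> 0 <= eps ->
  admissible B x -> admissible B y -> eps <= Rabs (x i - y i) ->
  (a2 p gamma w x i + a2 p gamma w y i) / 2 + delta p gamma B eps w i <= a2 p gamma w (mid x y) i.
Proof.
  intros Hp Hg He Hx Hy Hxy.
  pose proof (adm_x B x i Hx). pose proof (adm_x B y i Hy).
  unfold a2, delta.
  replace (1 + gamma * mid x y i) with (((1 + gamma * x i) + (1 + gamma * y i)) / 2)
    by (unfold mid; field).
  apply gen_mid; try nra.
  - apply Rmult_le_pos; [|lra]. apply Rmult_le_pos; [lra|]. apply pow_le; lra.
  - replace (1 + gamma * x i - (1 + gamma * y i)) with (gamma * (x i - y i)) by ring.
    rewrite !Rpow_mult_distr. apply Rmult_le_compat_l. nra.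
    rewrite <- (pow2_abs (x i - y i)). apply pow_incr. lra.
Qed.

Lemma a3_mid p gamma B w x y i : 0 < p < 1 -> 0 < gamma -> (1 <= w)%nat ->
  admissible B x -> admissible B y ->
  (a3 p gamma B w x i + a3 p gamma B w y i) / 2 <= a3 p gamma B w (mid x y) i.
Proof.
  intros Hp Hg Hw Hx Hy.
  pose proof (adm_s B x i Hx). pose proof (adm_s B y i Hy).
  assert (HW : 1 <= INR w) by (apply (le_INR 1); lia).
  set (a := 1 + gamma * ((B - sum_f_R0 x i) / INR w)).
  set (b := 1 + gamma * ((B - sum_f_R0 y i) / INR w)).
  assert (0 <= (B - sum_f_R0 x i) / INR w) by (apply Rle_mult_inv_pos; lra).
  assert (0 <= (B - sum_f_R0 y i) / INR w) by (apply Rle_mult_inv_pos; lra).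
  assert (Ha : 1 <= a) by (unfold a; nra).
  assert (Hb : 1 <= b) by (unfold b; nra).
  unfold a3. rewrite sum_mid. fold a b.
  replace (1 + gamma * ((B - (sum_f_R0 x i + sum_f_R0 y i) / 2) / INR w)) with ((a + b) / 2)
    by (unfold a, b; field; lra).
  pose proof (gen_mid (p ^ 2 * (1 - p) ^ (i + w) * (INR w / 2)) a b (a + b) 0).
  replace (0 ^ 2 / (4 * (a + b) ^ 2)) with 0 in H3 by (field; lra).
  rewrite Rplus_0_r, ln_1, Rmult_0_r, Rplus_0_r in H3.
  apply H3; try lra.
  - apply Rmult_le_pos; [|lra]. apply Rmult_le_pos; [nra|]. apply pow_le; lra.
  - replace (0 ^ 2) with 0 by ring. apply pow2_ge_0.
Qed.

Lemma ext0_lt n v i : (i < n)%nat -> ext0 n v i = v i.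
Proof. intros H. unfold ext0. apply Nat.ltb_lt in H. rewrite H. reflexivity. Qed.

Lemma ext0_ge n v i : (n <= i)%nat -> ext0 n v i = 0.
Proof. intros H. unfold ext0. apply Nat.ltb_ge in H. rewrite H. reflexivity. Qed.

Lemma sum_mono (a : nat -> R) m k : (forall i, 0 <= a i) -> (m <= k)%nat ->
  sum_f_R0 a m <= sum_f_R0 a k.
Proof.
  intros Ha Hmk. induction Hmk; [lra|]. simpl. pose proof (Ha (S m0)). lra.
Qed.

Lemma ext0_sum_eq n v m : (m < n)%nat -> sum_f_R0 (ext0 n v) m = sum_f_R0 v m.
Proof.
  induction m; intros H; simpl.
  - apply ext0_lt; lia.
  - rewrite IHm by lia. rewrite ext0_lt by lia. reflexivity.
Qed.

Lemma ext0_sum_const n v m : (1 <= n)%nat ->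
  sum_f_R0 (ext0 n v) (n - 1 + m) = sum_f_R0 (ext0 n v) (n - 1).
Proof.
  intros Hn. induction m.
  - rewrite Nat.add_0_r. reflexivity.
  - replace (n - 1 + S m)%nat with (S (n - 1 + m)) by lia. simpl.
    rewrite IHm. rewrite ext0_ge by lia. ring.
Qed.

Lemma feas_adm B n v : (1 <= n)%nat -> feasibleN B n v -> admissible B (ext0 n v).
Proof.
  intros Hn [H1 H2].
  assert (Hnn : forall i, 0 <= ext0 n v i).
  { intros i. destruct (Nat.lt_ge_cases i n).
    - rewrite ext0_lt; auto. - rewrite ext0_ge; auto; lra. }
  split; auto.
  intros m. apply Rle_trans with (sum_f_R0 (ext0 n v) (n - 1 + m)).
  - apply sum_mono; auto; lia.
  - rewrite ext0_sum_const by auto. rewrite ext0_sum_eq by lia.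
    rewrite <- sum_n_Reals. exact H2.
Qed.

Lemma adm_feas B n y : admissible B y -> feasibleN B n y.
Proof.
  intros [H1 H2]. split; auto. rewrite sum_n_Reals. apply H2.
Qed.

Lemma Series_mid_lin (a b c : nat -> R) : ex_series a -> ex_series b -> ex_series c ->
  Series (fun i => c i - (a i + b i) / 2) = Series c - (Series a + Series b) / 2.
Proof.
  intros Ha Hb Hc.
  assert (Hab : ex_series (fun i => / 2 * (a i + b i))).
  { apply (ex_series_ext (fun i => scal (/2) (plus (a i) (b i)))); [intros; reflexivity|].
    apply (@ex_series_scal_l R_AbsRing R_NormedModule).
    apply (@ex_series_plus R_AbsRing R_NormedModule); auto. }
  rewrite (Series_ext _ (fun i => c i - (/ 2 * (a i + b i)))) by (intros; field).
  rewrite Series_minus by auto. rewrite Series_scal_l, Series_plus by auto. field.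
Qed.

Lemma ex_series_mid_lin (a b c : nat -> R) : ex_series a -> ex_series b -> ex_series c ->
  ex_series (fun i => c i - (a i + b i) / 2).
Proof.
  intros Ha Hb Hc.
  apply (ex_series_ext (fun i => plus (c i) (opp (scal (/2) (plus (a i) (b i)))))).
  { intros i. unfold plus, opp, scal; simpl. unfold mult; simpl. field. }
  apply (@ex_series_minus R_AbsRing R_NormedModule); auto.
  apply (@ex_series_scal_l R_AbsRing R_NormedModule).
  apply (@ex_series_plus R_AbsRing R_NormedModule); auto.
Qed.

Lemma delta_nonneg p gamma B eps w i : 0 < p < 1 -> 0 <= gamma -> 0 <= delta p gamma B eps w i.
Proof.
  intros Hp Hg. unfold delta. pose proof ln2_pos.
  apply Rmult_le_pos.
  - apply Rle_mult_inv_pos; [|lra]. apply Rmult_le_pos; [|lra]. apply Rmult_le_pos; [lra|].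
    apply pow_le; lra.
  - rewrite <- ln_1. apply ln_le; [lra|].
    assert (0 <= (gamma * eps) ^ 2 / (4 * (1 + gamma * B) ^ 2)).
    { destruct (Req_dec (1 + gamma * B) 0) as [E|E].
      - rewrite E. replace (4 * 0 ^ 2) with 0 by ring. rewrite Rdiv_0_r. lra.
      - apply Rle_mult_inv_pos. apply pow2_ge_0. assert (0 < (1 + gamma * B) ^ 2).
        { apply pow2_gt_0. auto. } lra. }
    lra.
Qed.

Lemma T_mid p gamma B w x y j eps : 0 < p < 1 -> 0 < gamma -> (1 <= w)%nat -> 0 <= eps ->
  admissible B x -> admissible B y -> eps <= Rabs (x j - y j) ->
  (T_inf p gamma B w x + T_inf p gamma B w y) / 2 + delta p gamma B eps w j
  <= T_inf p gamma B w (mid x y).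
Proof.
  intros Hp Hg Hw He Hx Hy Hj.
  pose proof (mid_adm B x y Hx Hy) as Hm.
  rewrite !T_inf_eq.
  pose proof (a2_ex p gamma B w x Hp Hg Hx).
  pose proof (a2_ex p gamma B w y Hp Hg Hy).
  pose proof (a2_ex p gamma B w (mid x y) Hp Hg Hm).
  pose proof (a3_ex p gamma B w x Hp Hg Hw Hx).
  pose proof (a3_ex p gamma B w y Hp Hg Hw Hy).
  pose proof (a3_ex p gamma B w (mid x y) Hp Hg Hw Hm).
  pose proof (Series_mid_lin _ _ _ H H0 H1) as E2.
  pose proof (Series_mid_lin _ _ _ H2 H3 H4) as E3.
  assert (D2 : delta p gamma B eps w j <=
     Series (fun i => a2 p gamma w (mid x y) i - (a2 p gamma w x i + a2 p gamma w y i) / 2)).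
  { eapply Rle_trans; [|apply (term_le_Series _ j)].
    - pose proof (a2_mid p gamma B w x y j eps Hp Hg He Hx Hy Hj). simpl. lra.
    - apply ex_series_mid_lin; auto.
    - intros i. pose proof (a2_mid p gamma B w x y i 0 Hp Hg (Rle_refl 0) Hx Hy (Rabs_pos _)).
      pose proof (delta_nonneg p gamma B 0 w i Hp (Rlt_le _ _ Hg)). lra. }
  assert (D3 : 0 <=
     Series (fun i => a3 p gamma B w (mid x y) i - (a3 p gamma B w x i + a3 p gamma B w y i) / 2)).
  { apply Series_ge0. apply ex_series_mid_lin; auto.
    intros i. pose proof (a3_mid p gamma B w x y i Hp Hg Hw Hx Hy). lra. }
  lra.
Qed.

Lemma T_trunc p gamma B w y n : 0 < p < 1 -> 0 < gamma -> (1 <= w)%nat -> (1 <= n)%nat ->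
  admissible B y ->
  T_inf p gamma B w y - (p / 2 * log2 (1 + gamma * B)) * (1 - p) ^ n / (1 - (1 - p))
  <= T_inf p gamma B w (ext0 n y).
Proof.
  intros Hp Hg Hw Hn Hy.
  pose proof (feas_adm B n y Hn (adm_feas B n y Hy)) as He.
  rewrite !T_inf_eq.
  pose proof (a2_ex p gamma B w y Hp Hg Hy).
  pose proof (a2_ex p gamma B w (ext0 n y) Hp Hg He).
  pose proof (a3_ex p gamma B w y Hp Hg Hw Hy).
  pose proof (a3_ex p gamma B w (ext0 n y) Hp Hg Hw He).
  assert (D2 : Series (fun i => a2 p gamma w y i - a2 p gamma w (ext0 n y) i)
              <= (p / 2 * log2 (1 + gamma * B)) * (1 - p) ^ n / (1 - (1 - p))).
  { apply tail_bound; try lra; try lia.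
    - apply Rmult_le_pos; [lra|]. apply log2_nonneg. pose proof (adm_x B y 0 Hy). nra.
    - intros i Hi. unfold a2. rewrite ext0_lt by auto. ring.
    - intros i. destruct (Nat.lt_ge_cases i n).
      + assert (E : a2 p gamma w (ext0 n y) i = a2 p gamma w y i)
          by (unfold a2; rewrite ext0_lt; auto).
        rewrite E. pose proof (a2_bound p gamma B w y i Hp Hg Hy). lra.
      + assert (E : a2 p gamma w (ext0 n y) i = 0)
          by (unfold a2; rewrite ext0_ge, Rmult_0_r, Rplus_0_r, log2_1; auto; ring).
        rewrite E. pose proof (a2_bound p gamma B w y i Hp Hg Hy). lra. }
  rewrite Series_minus in D2 by auto.
  assert (D3 : Series (a3 p gamma B w y) <= Series (a3 p gamma B w (ext0 n y))).
  { apply Series_le; auto. intros i. split.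
    - apply (a3_bound p gamma B w y i Hp Hg Hw Hy).
    - unfold a3. pose proof (adm_s B y i Hy).
      assert (HW : 1 <= INR w) by (apply (le_INR 1); lia).
      assert (Hs : sum_f_R0 (ext0 n y) i <= sum_f_R0 y i).
      { apply sum_Rle. intros k _. destruct (Nat.lt_ge_cases k n).
        + rewrite ext0_lt by auto. lra.
        + rewrite ext0_ge by auto. apply (adm_x B y k Hy). }
      apply Rmult_le_compat_l.
      + apply Rmult_le_pos; [|lra]. apply Rmult_le_pos; [nra|]. apply pow_le; lra.
      + apply log2_le.
        * assert (0 <= (B - sum_f_R0 y i) / INR w) by (apply Rle_mult_inv_pos; lra). nra.
        * apply Rplus_le_compat_l, Rmult_le_compat_l; [lra|].
          unfold Rdiv. apply Rmult_le_compat_r; [left; apply Rinv_0_lt_compat; lra|]. lra. }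
  lra.
Qed.

Lemma delta_pos p gamma B eps w i : 0 < p < 1 -> 0 < gamma -> 0 < B -> 0 < eps ->
  0 < delta p gamma B eps w i.
Proof.
  intros Hp Hg HB He. unfold delta. pose proof ln2_pos.
  apply Rmult_lt_0_compat.
  - apply Rdiv_lt_0_compat; [|lra]. apply Rmult_lt_0_compat; [|lra]. apply Rmult_lt_0_compat; [lra|].
    apply pow_lt; lra.
  - rewrite <- ln_1. apply ln_increasing; [lra|].
    assert (0 < (gamma * eps) ^ 2 / (4 * (1 + gamma * B) ^ 2)).
    { apply Rdiv_lt_0_compat. apply pow2_gt_0. nra. assert (0 < (1 + gamma * B) ^ 2).
      { apply pow2_gt_0. nra. } lra. }
    lra.
Qed.

Theorem lemma9 (p gamma B : R) (w : nat)
  (xiN : nat -> nat -> R) (xistar : nat -> R) :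
  0 < p < 1 -> 0 < gamma -> 0 < B -> (1 <= w)%nat ->
  (forall N, (1 <= N)%nat ->
     feasibleN B N (xiN N) /\
     (forall eta, feasibleN B N eta ->
        T_N p gamma B w N eta <= T_N p gamma B w N (xiN N))) ->
  admissible B xistar ->
  (forall x, admissible B x -> T_inf p gamma B w x <= T_inf p gamma B w xistar) ->
  (forall y, admissible B y ->
     (forall x, admissible B x -> T_inf p gamma B w x <= T_inf p gamma B w y) ->
     y = xistar) ->
  forall j : nat, is_lim_seq (fun N => xiN N j) (xistar j).
Proof.
  intros Hp Hg HB Hw Hmax Hadm Hopt _ j.
  apply is_lim_seq_Reals. intros eps Heps.
  set (d := delta p gamma B eps w j).
  assert (Hd : 0 < d) by (apply delta_pos; auto).
  set (K := (p / 2 * log2 (1 + gamma * B)) / (1 - (1 - p))).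
  assert (HK : 0 <= K).
  { unfold K. apply Rle_mult_inv_pos; [|lra]. apply Rmult_le_pos; [lra|].
    apply log2_nonneg. nra. }
  destruct (pow_lt_1_zero (1 - p) ltac:(rewrite Rabs_pos_eq; lra) (2 * d / (K + 1)))
    as [N0 HN0].
  { apply Rdiv_lt_0_compat; lra. }
  exists (Nat.max N0 (S j)). intros n Hn. unfold R_dist.
  destruct (Rlt_or_le (Rabs (xiN n j - xistar j)) eps) as [Hlt|Hge]; auto. exfalso.
  assert (Hn1 : (1 <= n)%nat) by lia.
  destruct (Hmax n Hn1) as [Hf Hopt'].
  set (x := ext0 n (xiN n)).
  assert (Hx : admissible B x) by (apply feas_adm; auto).
  assert (Hxj : x j = xiN n j) by (apply ext0_lt; lia).
  pose proof (T_mid p gamma B w x xistar j eps Hp Hg Hw (Rlt_le _ _ Heps) Hx Hadm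
                ltac:(rewrite Hxj; exact Hge)) as M1.
  pose proof (Hopt (mid x xistar) (mid_adm B x xistar Hx Hadm)) as M2.
  pose proof (Hopt' xistar (adm_feas B n xistar Hadm)) as M3. unfold T_N in M3.
  pose proof (T_trunc p gamma B w xistar n Hp Hg Hw Hn1 Hadm) as M4.
  fold x in M3. fold d in M1.
  replace (p / 2 * log2 (1 + gamma * B) * (1 - p) ^ n / (1 - (1 - p))) with (K * (1 - p) ^ n)
    in M4 by (unfold K; field; lra).
  pose proof (HN0 n ltac:(lia)) as Hq.
  assert (K * (1 - p) ^ n < 2 * d).
  { assert ((1 - p) ^ n <= Rabs ((1 - p) ^ n)) by apply RRle_abs.
    apply Rle_lt_trans with (K * (2 * d / (K + 1))).
    - apply Rmult_le_compat_l; lra.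
    - replace (K * (2 * d / (K + 1))) with (2 * d * (K / (K + 1))) by (field; lra).
      rewrite <- (Rmult_1_r (2 * d)) at 2. apply Rmult_lt_compat_l; [lra|].
      apply (Rmult_lt_reg_r (K + 1)); [lra|]. unfold Rdiv. rewrite Rmult_assoc, Rinv_l; lra. }
  lra.
Qed.
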